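(* Let $h>0$ and $v\in AC([0,2\pi))$ with $v_s\in TV([0,2\pi))$. Then there exists at most one weak solution $u\in AC([0,2\pi))$ with $u_s\in TV$ and $u(0)+\frac12(2\pi)^2=u(2\pi)$ of $$u-v\in h\frac{d}{ds}\partial J(u_s).$$ Here a weak solution is one for which there is $\omega\in W^1_1([0,2\pi))$ with $\omega(x)\in\partial J(u_s(x))$ and $u-v=h\,\omega_s$.
   Context: Let $$J(\varphi)=\frac{\pi}{4}\Big(|\varphi-\tfrac{3\pi}{4}|+|\varphi-\tfrac{\pi}{4}|+|\varphi+\tfrac{\pi}{4}|+|\varphi+\tfrac{3\pi}{4}|\Big),$$ with subdifferential $\partial J$. *)

(* Defs.v *)
From HB Require Import structures.
From mathcomp Require Import all_boot all_order all_algebra.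
From mathcomp Require Import all_classical all_reals all_analysis.
Set Implicit Arguments. Unset Strict Implicit. Unset Printing Implicit Defensive.
Import Order.TTheory GRing.Theory Num.Theory.
Import numFieldNormedType.Exports.
Local Open Scope classical_set_scope.
Local Open Scope ring_scope.

Definition J {R : realType} (phi : R) : R :=
  pi / 4 * (`|phi - 3 * pi / 4| + `|phi - pi / 4| + `|phi + pi / 4|
            + `|phi + 3 * pi / 4|).

Definition subdiffJ {R : realType} (phi p : R) : Prop :=
  forall psi : R, J phi + p * (psi - phi) <= J psi.

Definition abs_continuous {R : realType} (a b : R) (f : R -> R) : Prop :=
  forall e : R, 0 < e -> exists2 d : R, 0 < d &
    forall (n : nat) (x y : nat -> R),
      (forall i, (i < n)%N -> a <= x i /\ x i <= y i /\ y i <= b) ->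
      (forall i j, (i < n)%N -> (j < n)%N -> i <> j ->
         y i <= x j \/ y j <= x i) ->
      \sum_(i < n) (y i - x i) < d ->
      \sum_(i < n) `|f (y i) - f (x i)| < e.

Definition deriv_BV {R : realType} (a b : R) (f : R -> R) : Prop :=
  exists g : R -> R, bounded_variation a b g /\
    {ae (@lebesgue_measure R), forall x, x \in `[a, b] ->
       derivable f x 1 /\ derive1 f x = g x}.

(* weak solution of  u - v \in h d/ds \partial J(u_s)  on the periodic
   interval [0, 2pi): there is omega in W^1_1([0,2pi)) (absolutely
   continuous and 2pi-periodic, i.e. omega 0 = omega (2pi)) with
   omega(x) \in \partial J(u_s(x)) and u - v = h omega_s a.e. *)
Definition weak_solution {R : realType} (h : R) (v u : R -> R) : Prop :=
  exists omega : R -> R,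
    abs_continuous 0 (2 * pi) omega /\ omega 0 = omega (2 * pi) /\
    {ae (@lebesgue_measure R), forall x, x \in `[0, 2 * pi] ->
       derivable u x 1 /\ derivable omega x 1 /\
       subdiffJ (derive1 u x) (omega x) /\
       u x - v x = h * derive1 omega x}.

(* Main.v *)
Require Import Defs.
From HB Require Import structures.
From mathcomp Require Import all_boot all_order all_algebra.
From mathcomp Require Import all_classical all_reals all_analysis.
From mathcomp Require Import ring lra.
From mathcomp Require Import measurable_realfun.
Import Order.TTheory GRing.Theory Num.Theory.
Import numFieldNormedType.Exports.
Local Open Scope classical_set_scope.
Local Open Scope ring_scope.
Set Implicit Arguments.
Unset Strict Implicit.

Lemma deriv_approx (R : realType) (f : R -> R) (t e : R) :
  derivable f t 1 -> 0 < e -> exists2 r : R, 0 < r &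
  forall y, `|y - t| < r -> `|f y - f t - derive1 f t * (y - t)| <= e * `|y - t|.
Proof.
move=> df e0.
move: df => /cvgrPdist_le /(_ e e0).
rewrite derive1E.
move=> H.
have := H.
rewrite /prop_near1 /= /within /=.
move=> /nbhs_ballP.
move=> [r r0 Hr]; exists r => // y ry.
have [->|yt] := eqVneq y t; first by rewrite !subrr !(mulr0, subrr, normr0).
have yt0 : y - t != 0 by rewrite subr_eq0.
have := Hr (y - t); rewrite /ball /= sub0r normrN => /(_ ry yt0).
rewrite -/('D_1 f t) /GRing.scale /= mulr1 subrK.
move=> H1.
have -> : f y - f t - 'D_1 f t * (y - t) = - ((y - t) * ('D_1 f t - (y - t)^-1 * (f y - f t))).
  by field.
by rewrite normrN normrM mulrC ler_wpM2r.
Qed.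

Lemma cousin (R : realType) (a b : R) (P : R -> Prop) (good : R -> R -> Prop) :
  a <= b -> P a ->
  (forall y z, a <= y -> y <= z -> z <= b -> P y -> good y z -> P z) ->
  (forall t, a <= t -> t <= b -> exists2 r : R, 0 < r &
     forall y z, a <= y -> z <= b -> t - r < y -> y <= t -> t <= z ->
       z < t + r -> good y z) ->
  P b.
Proof.
move=> ab Pa step gauge.
pose S := [set x | a <= x /\ x <= b /\ P x].
have hS : has_sup S.
  split; first by exists a; split; rewrite ?lexx.
  by exists b => x [_ []].
set s := sup S.
have as_ : a <= s by apply: sup_upper_bound => //; split; rewrite ?lexx.
have sb : s <= b by apply: ge_sup; [case: hS|move=> x [_ []]].
have [r r0 Hr] := gauge s as_ sb.
have [x [ax [xb Px]] sx] := sup_adherent r0 hS.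
have xs : x <= s by apply: sup_upper_bound.
have Ps : P s.
  apply: (step x s) => //; apply: Hr => //; rewrite ?lexx //; lra.
have [sb'|] := ltP s b; last first.
  by move=> bs; have -> : b = s by apply/eqP; rewrite eq_le bs sb.
pose z := Num.min b (s + r / 2).
have sz : s < z by rewrite lt_min sb' /=; lra.
have zb : z <= b by rewrite ge_min lexx.
have Pz : P z.
  apply: (step x z) => //; first lra.
  apply: Hr => //; try lra.
  rewrite gt_min; apply/orP; right; lra.
have : z <= s by apply: sup_upper_bound => //; split; [lra|split].
lra.
Qed.

Lemma ac_mono_eps (R : realType) (a b : R) (f : R -> R) (eps : R) :
  a <= b -> 0 < eps -> abs_continuous a b f ->
  {ae (@lebesgue_measure R), forall x, x \in `[a, b] ->
     derivable f x 1 /\ 0 <= derive1 f x} ->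
  f a - eps * (b - a) - eps <= f b.
Proof.
move=> ab e0 acf Hae.
have [d d0 Hd] := acf eps e0.
pose Q := fun x => x \in `[a, b] -> derivable f x 1 /\ 0 <= derive1 f x.
have Nneg : (@lebesgue_measure R).-negligible (~` [set x | Q x]) := Hae.
have d20 : 0 < d / 2 by rewrite divr_gt0.
have [U [oU NU muU]] := outer_measure_open_le (~` [set x | Q x]) d20.
move: muU; rewrite (negligible_outer_measure _).1 // add0e => muU.
have mU : measurable U by apply: open_measurable.
pose mu := (@lebesgue_measure R).
pose P := fun x => exists n (xs ys : nat -> R),
  [/\ (forall i, (i < n)%N -> a <= xs i /\ xs i <= ys i /\ ys i <= x),
      (forall i j, (i < n)%N -> (j < n)%N -> i <> j -> ys i <= xs j \/ ys j <= xs i),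
      ((\sum_(i < n) (ys i - xs i))%:E <= mu (U `&` `[a, x[))%E &
      f a - eps * (x - a) - \sum_(i < n) `|f (ys i) - f (xs i)| <= f x].
pose good := fun y z => f y - eps * (z - y) <= f z \/ (forall w, y <= w -> w <= z -> U w).
suff : P b.
  move=> [n [xs [ys [H1 H2 H3 H4]]]].
  have Hl : \sum_(i < n) (ys i - xs i) < d.
    have : ((\sum_(i < n) (ys i - xs i))%:E <= (d / 2)%:E)%E.
      apply: (le_trans H3); apply: le_trans muU.
      apply: le_measure => //; rewrite inE //.
      by apply: measurableI => //; apply: measurable_itv.
    rewrite lee_fin => H; lra.
  have := Hd n xs ys H1 H2 Hl; lra.
apply: (@cousin R a b P good ab).
- exists 0%N, (fun=> 0), (fun=> 0); split => //.
  + by rewrite big_ord0 measure_ge0.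
  + by rewrite big_ord0 subrr mulr0 !subr0.
- move=> y z ay yz zb [n [xs [ys [H1 H2 H3 H4]]]] gyz.
  have Heq : f a - eps * (z - a) - \sum_(i < n) `|f (ys i) - f (xs i)| =
     (f a - eps * (y - a) - \sum_(i < n) `|f (ys i) - f (xs i)|) - eps * (z - y) by ring.
  have ezy : 0 <= eps * (z - y) by apply: mulr_ge0; [exact: ltW|rewrite subr_ge0].
  have [Heqyz|yz'] := eqVneq y z.
    by rewrite -Heqyz; exists n, xs, ys.
  have yz2 : y < z by rewrite lt_neqAle yz' yz.
  case: gyz => [g1|g2].
    exists n, xs, ys; split => //.
    + move=> i ilt; have [? [? ?]] := H1 i ilt; split => //; split => //; lra.
    + apply: (le_trans H3); apply: le_measure; rewrite ?inE.
      * by apply: measurableI => //; apply: measurable_itv.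
      * by apply: measurableI => //; apply: measurable_itv.
      move=> w [Uw]; rewrite /= !in_itv /= => /andP[aw wy]; split => //.
      by rewrite aw /=; lra.
    + lra.
  pose xs' := fun i => if i == n then y else xs i.
  pose ys' := fun i => if i == n then z else ys i.
  exists n.+1, xs', ys'; split.
  + move=> i; rewrite ltnS leq_eqVlt => /orP[/eqP ->|ilt].
      by rewrite /xs' /ys' eqxx; split => //; split => //.
    rewrite /xs' /ys' (ltn_eqF ilt).
    have [? [? ?]] := H1 i ilt; split => //; split => //; lra.
  + move=> i j; rewrite !ltnS /xs' /ys' leq_eqVlt => /orP[/eqP ->|ilt];
      rewrite leq_eqVlt => /orP[/eqP ->|jlt] ij.
    * by exfalso; apply: ij.
    * rewrite eqxx (ltn_eqF jlt); have [? [? ?]] := H1 j jlt; right; lra.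
    * rewrite eqxx (ltn_eqF ilt); have [? [? ?]] := H1 i ilt; left; lra.
    * by rewrite (ltn_eqF ilt) (ltn_eqF jlt); apply: H2.
  + rewrite big_ord_recr /= /xs' /ys' eqxx.
    rewrite (eq_bigr (fun i : 'I_n => ys i - xs i)); last first.
      by move=> i _; rewrite /= (ltn_eqF (ltn_ord i)).
    have sub1 : (U `&` `[a, y[) `|` `[y, z[ `<=` U `&` `[a, z[.
      move=> w [[Uw]|]; rewrite /= !in_itv /= => /andP[h1 h2].
        by split => //; rewrite h1 /=; lra.
      split; first by apply: g2; lra.
      apply/andP; split; lra.
    apply: le_trans; last first.
      apply: le_measure; last exact: sub1; rewrite inE.
        apply: measurableU; last by apply: measurable_itv.
        by apply: measurableI => //; apply: measurable_itv.
      by apply: measurableI => //; apply: measurable_itv.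
    rewrite measureU //=.
    * rewrite EFinD; apply: leeD => //.
      by rewrite lebesgue_measure_itv /= lte_fin yz2 EFinB lexx.
    * by apply: measurableI => //; apply: measurable_itv.
    * apply/seteqP; split => // w [[_]]; rewrite /= !in_itv /=.
      move=> /andP[_ h1] /andP[h2 _]; lra.
  + rewrite big_ord_recr /= /xs' /ys' eqxx.
    rewrite (eq_bigr (fun i : 'I_n => `|f (ys i) - f (xs i)|)); last first.
      by move=> i _; rewrite /= (ltn_eqF (ltn_ord i)).
    have := ler_norm (f y - f z); rewrite distrC.
    lra.
- move=> t at_ tb.
  have [Nt|Qt] := pselect (Q t); last first.
    have Ut : U t by apply: NU.
    have /nbhs_ballP [r /= r0 Hr] : nbhs t U by apply: oU.
    exists r => // y z ay zb h1 h2 h3 h4; right => w yw wz.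
    apply: Hr; rewrite /ball /= ltr_norml; apply/andP; split; lra.
  have [df Df] : derivable f t 1 /\ 0 <= derive1 f t.
    by apply: Nt; rewrite in_itv /= at_ tb.
  have [r r0 Hr] := deriv_approx df e0.
  exists r => // y z ay zb h1 h2 h3 h4; left.
  have := Hr z; have := Hr y.
  rewrite (ler0_norm (x := y - t)); last lra.
  rewrite (ger0_norm (x := z - t)); last lra.
  move=> /(_ ltac:(lra)) /ler_normlP [Hy1 Hy2].
  move=> /(_ ltac:(lra)) /ler_normlP [Hz1 Hz2].
  have D1 : 0 <= derive1 f t * (z - t) by rewrite mulr_ge0 // subr_ge0.
  have D2 : 0 <= derive1 f t * (t - y) by rewrite mulr_ge0 // subr_ge0.
  have E1 : derive1 f t * (y - t) = - (derive1 f t * (t - y)) by ring.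
  have E2 : eps * - (y - t) = eps * (t - y) by ring.
  have E3 : eps * (z - y) = eps * (z - t) + eps * (t - y) by ring.
  lra.
Qed.
Lemma ac1 (R : realType) (a b : R) (f : R -> R) (e : R) :
  abs_continuous a b f -> 0 < e -> exists2 d : R, 0 < d &
  forall x y, a <= x -> x <= y -> y <= b -> y - x < d -> `|f y - f x| < e.
Proof.
move=> acf e0; have [d d0 Hd] := acf e e0; exists d => // x y ax xy yb yxd.
have := Hd 1%N (fun=> x) (fun=> y).
rewrite !big_ord1; apply => //.
by move=> i j; rewrite !ltnS !leqn0 => /eqP -> /eqP ->.
Qed.

Lemma ac_restrict (R : realType) (a b a' b' : R) (f : R -> R) :
  abs_continuous a b f -> a <= a' -> b' <= b -> abs_continuous a' b' f.
Proof.
move=> acf aa bb e e0; have [d d0 Hd] := acf e e0; exists d => // n x y H1 H2 H3.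
apply: Hd => // i ilt; have [? [? ?]] := H1 i ilt; split; first lra.
split => //; lra.
Qed.

Lemma ac_add (R : realType) (a b : R) (f g : R -> R) :
  abs_continuous a b f -> abs_continuous a b g ->
  abs_continuous a b (fun x => f x + g x).
Proof.
move=> acf acg e e0.
have e20 : 0 < e / 2 by rewrite divr_gt0.
have [d1 d10 H1] := acf _ e20; have [d2 d20 H2] := acg _ e20.
exists (Num.min d1 d2); first by rewrite lt_min d10 d20.
move=> n x y Hb Hno Hs.
have Hs1 : \sum_(i < n) (y i - x i) < d1 by move: Hs; rewrite lt_min => /andP[].
have Hs2 : \sum_(i < n) (y i - x i) < d2 by move: Hs; rewrite lt_min => /andP[].
have := H1 n x y Hb Hno Hs1; have := H2 n x y Hb Hno Hs2.
have : \sum_(i < n) `|f (y i) + g (y i) - (f (x i) + g (x i))| <=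
       \sum_(i < n) `|f (y i) - f (x i)| + \sum_(i < n) `|g (y i) - g (x i)|.
  rewrite -big_split /=; apply: ler_sum => i _.
  have -> : f (y i) + g (y i) - (f (x i) + g (x i)) =
     (f (y i) - f (x i)) + (g (y i) - g (x i)) by ring.
  exact: ler_normD.
lra.
Qed.

Lemma ac_opp (R : realType) (a b : R) (f : R -> R) :
  abs_continuous a b f -> abs_continuous a b (fun x => - f x).
Proof.
move=> acf e e0; have [d d0 Hd] := acf e e0; exists d => // n x y H1 H2 H3.
rewrite (eq_bigr (fun i : 'I_n => `|f (y i) - f (x i)|)); first exact: Hd.
by move=> i _; rewrite -opprD normrN.
Qed.

Lemma ac_lin (R : realType) (a b k : R) :
  abs_continuous a b (fun x => k * x).
Proof.
move=> e e0.
have k1 : 0 < `|k| + 1 by rewrite ltr_wpDl.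
exists (e / (`|k| + 1)); first by rewrite divr_gt0.
move=> n x y H1 H2 H3.
rewrite (eq_bigr (fun i : 'I_n => `|k| * (y i - x i))); last first.
  move=> i _; have [? [? ?]] := H1 i (ltn_ord i).
  rewrite -mulrBr normrM (ger0_norm (x := y i - x i)) //; lra.
rewrite -mulr_sumr.
have S0 : 0 <= \sum_(i < n) (y i - x i).
  apply: sumr_ge0 => i _; rewrite subr_ge0.
  by have [? [? ?]] := H1 i (ltn_ord i).
move: H3; rewrite ltr_pdivlMr // => H3.
have : `|k| * \sum_(i < n) (y i - x i) <= (`|k| + 1) * \sum_(i < n) (y i - x i).
  by rewrite ler_wpM2r // lerDl.
lra.
Qed.

Lemma ac_bounded (R : realType) (a b : R) (f : R -> R) :
  a <= b -> abs_continuous a b f ->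
  exists M : R, forall x, a <= x -> x <= b -> `|f x| <= M.
Proof.
move=> ab acf.
pose P := fun t => exists M : R, forall x, a <= x -> x <= t -> `|f x| <= M.
pose good := fun y z : R => forall w, y <= w -> w <= z -> `|f w - f y| <= 1.
suff [M HM] : P b by exists M.
apply: (@cousin R a b P good ab).
- exists `|f a| => x ax xa; have -> : x = a by apply/eqP; rewrite eq_le xa ax.
  by rewrite lexx.
- move=> y z ay yz zb [M HM] gyz; exists (M + 1) => x ax xz.
  have [xy|yx] := leP x y; first by have := HM x ax xy; lra.
  have := gyz x (ltW yx) xz; have := HM y ay (lexx y).
  have := ler_normD (f x - f y) (f y); rewrite subrK; lra.
- move=> t at_ tb; have [d d0 Hd] := ac1 acf ltr01.
  exists (d / 2); first by rewrite divr_gt0.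
  move=> y z ay zb h1 h2 h3 h4 w yw wz.
  apply: ltW; apply: Hd => //; lra.
Qed.

Lemma ac_mul (R : realType) (a b : R) (f g : R -> R) :
  a <= b -> abs_continuous a b f -> abs_continuous a b g ->
  abs_continuous a b (fun x => f x * g x).
Proof.
move=> ab acf acg.
have [M1 HM1] := ac_bounded ab acf; have [M2 HM2] := ac_bounded ab acg.
pose M := `|M1| + `|M2| + 1.
have M0 : 0 < M by rewrite /M ltr_wpDl // addr_ge0.
have HM1' : forall x, a <= x -> x <= b -> `|f x| <= M.
  move=> x ax xb; have := HM1 x ax xb; have := ler_norm M1.
  have : 0 <= `|M2| by []; rewrite /M; lra.
have HM2' : forall x, a <= x -> x <= b -> `|g x| <= M.
  move=> x ax xb; have := HM2 x ax xb; have := ler_norm M2.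
  have : 0 <= `|M1| by []; rewrite /M; lra.
move=> e e0.
have e20 : 0 < e / (2 * M) by rewrite divr_gt0 // mulr_gt0.
have [d1 d10 H1] := acf _ e20; have [d2 d20 H2] := acg _ e20.
exists (Num.min d1 d2); first by rewrite lt_min d10 d20.
move=> n x y Hb Hno Hs.
have Hs1 : \sum_(i < n) (y i - x i) < d1 by move: Hs; rewrite lt_min => /andP[].
have Hs2 : \sum_(i < n) (y i - x i) < d2 by move: Hs; rewrite lt_min => /andP[].
have := H1 n x y Hb Hno Hs1; have := H2 n x y Hb Hno Hs2.
have : \sum_(i < n) `|f (y i) * g (y i) - f (x i) * g (x i)| <=
       M * \sum_(i < n) `|f (y i) - f (x i)| + M * \sum_(i < n) `|g (y i) - g (x i)|.
  rewrite !mulr_sumr -big_split /=; apply: ler_sum => i _.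
  have [? [? ?]] := Hb i (ltn_ord i).
  have -> : f (y i) * g (y i) - f (x i) * g (x i) =
     (f (y i) - f (x i)) * g (y i) + f (x i) * (g (y i) - g (x i)) by ring.
  apply: (le_trans (ler_normD _ _)); rewrite !normrM.
  apply: lerD.
    rewrite mulrC; apply: ler_wpM2r => //; apply: HM2'; lra.
  apply: ler_wpM2r => //; apply: HM1'; lra.
have EM : M * (e / (2 * M)) = e / 2 by field; rewrite gt_eqF.
move=> H A B.
have HA : M * \sum_(i < n) `|g (y i) - g (x i)| < M * (e / (2 * M)) by rewrite ltr_pM2l.
have HB : M * \sum_(i < n) `|f (y i) - f (x i)| < M * (e / (2 * M)) by rewrite ltr_pM2l.
rewrite EM in HA HB.
lra.
Qed.

Lemma ac_mono (R : realType) (a b : R) (f : R -> R) :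
  a <= b -> abs_continuous a b f ->
  {ae (@lebesgue_measure R), forall x, x \in `[a, b] ->
     derivable f x 1 /\ 0 <= derive1 f x} ->
  f a <= f b.
Proof.
move=> ab acf Hae; apply/ler_addgt0Pr => e e0.
have k0 : 0 < b - a + 1 by lra.
have := @ac_mono_eps R a b f (e / (b - a + 1)) ab ltac:(by rewrite divr_gt0) acf Hae.
have -> : f a - e / (b - a + 1) * (b - a) - e / (b - a + 1) = f a - e.
  by field; rewrite gt_eqF.
lra.
Qed.

Lemma subdiff_mono (R : realType) (a b p q : R) :
  subdiffJ a p -> subdiffJ b q -> 0 <= (p - q) * (a - b).
Proof.
move=> /(_ b) H1 /(_ a) H2.
have E : (p - q) * (a - b) = - (p * (b - a) + q * (a - b)) by ring.
rewrite E; lra.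
Qed.

Lemma test (R : realType) (u1 u2 : R -> R) x :
  ((u1 - u2) * u2) x = (u1 x - u2 x) * u2 x.
Proof. by []. Qed.
Lemma ae_imp2 (R : realType) (P Q S : R -> Prop) :
  {ae (@lebesgue_measure R), forall x, P x} ->
  {ae (@lebesgue_measure R), forall x, Q x} ->
  (forall x, P x -> Q x -> S x) ->
  {ae (@lebesgue_measure R), forall x, S x}.
Proof.
move=> HP HQ H.
have HP' : (@lebesgue_measure R).-negligible (~` [set x | P x]) := HP.
have HQ' : (@lebesgue_measure R).-negligible (~` [set x | Q x]) := HQ.
suff : (@lebesgue_measure R).-negligible (~` [set x | S x]) by [].
apply: negligibleS (negligibleU HP' HQ').
move=> x /= nS; apply/not_andP => -[px qx]; apply: nS; exact: H.
Qed.

Lemma ae_imp (R : realType) (P S : R -> Prop) :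
  {ae (@lebesgue_measure R), forall x, P x} ->
  (forall x, P x -> S x) ->
  {ae (@lebesgue_measure R), forall x, S x}.
Proof.
move=> HP H; apply: (@ae_imp2 R P P) => // x px _; exact: H.
Qed.
Lemma derive1_mulf (R : realType) (f g : R -> R) x :
  derivable f x 1 -> derivable g x 1 ->
  derive1 (f * g) x = f x * derive1 g x + g x * derive1 f x.
Proof. by move=> df dg; rewrite !derive1E; apply: deriveM. Qed.

Lemma derive1_subf (R : realType) (f g : R -> R) x :
  derivable f x 1 -> derivable g x 1 ->
  derive1 (f - g) x = derive1 f x - derive1 g x.
Proof. by move=> df dg; rewrite !derive1E; apply: deriveB. Qed.

Lemma derive1_lin (R : realType) (k : R) x :
  derive1 (k \*: (@id R)) x = k.
Proof.
rewrite derive1E deriveZ; last exact: derivable_id.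
by rewrite derive_id; apply: mulr1.
Qed.

Unset Implicit Arguments.
Set Strict Implicit.
Theorem lemma4p2 (R : realType) (h : R) (v : R -> R) :
  0 < h ->
  abs_continuous 0 (2 * pi) v -> deriv_BV 0 (2 * pi) v ->
  forall u1 u2 : R -> R,
    abs_continuous 0 (2 * pi) u1 -> deriv_BV 0 (2 * pi) u1 ->
    u1 0 + 2^-1 * (2 * pi) ^+ 2 = u1 (2 * pi) ->
    weak_solution h v u1 ->
    abs_continuous 0 (2 * pi) u2 -> deriv_BV 0 (2 * pi) u2 ->
    u2 0 + 2^-1 * (2 * pi) ^+ 2 = u2 (2 * pi) ->
    weak_solution h v u2 ->
    forall x : R, x \in `[0, 2 * pi] -> u1 x = u2 x.
Proof.
move=> h0 _ _ u1 u2 acu1 _ bc1 [om1 [aco1 [pom1 ae1]]] acu2 _ bc2 [om2 [aco2 [pom2 ae2]]].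
set T := 2 * pi.
have T0 : 0 < T by rewrite /T mulr_gt0 // pi_gt0.
pose F := (u1 - u2) * (om1 - om2).
have FE : forall x, F x = (u1 x - u2 x) * (om1 x - om2 x) by [].
have acW : abs_continuous 0 T (fun x => u1 x + - u2 x) by apply: ac_add => //; apply: ac_opp.
have acZ : abs_continuous 0 T (fun x => om1 x + - om2 x) by apply: ac_add => //; apply: ac_opp.
have acF : abs_continuous 0 T F.
  have -> : F = (fun x => (u1 x + - u2 x) * (om1 x + - om2 x)) by apply/funext.
  by apply: ac_mul => //; lra.
have FT : F T = F 0.
  rewrite !FE -bc1 -pom1 -bc2 -pom2; ring.
have key : {ae (@lebesgue_measure R), forall x, x \in `[0, T] ->
    derivable F x 1 /\ (u1 x - u2 x) * (u1 x - u2 x) / h <= derive1 F x}.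
  apply: (ae_imp2 ae1 ae2) => x H1 H2 xin.
  have [du1 [do1 [s1 e1]]] := H1 xin.
  have [du2 [do2 [s2 e2]]] := H2 xin.
  have dW : derivable (u1 - u2) x 1 by apply: derivableB.
  have dZ : derivable (om1 - om2) x 1 by apply: derivableB.
  have dF0 : derivable F x 1 by apply: derivableM.
  split; first exact: dF0.
  rewrite /F derive1_mulf // derive1_subf // derive1_subf //.
  have -> : (u1 - u2) x = u1 x - u2 x by [].
  have -> : (om1 - om2) x = om1 x - om2 x by [].
  have := @subdiff_mono R (derive1 u1 x) (derive1 u2 x) (om1 x) (om2 x) s1 s2.
  have ew : u1 x - u2 x = h * (derive1 om1 x - derive1 om2 x).
    have -> : u1 x - u2 x = (u1 x - v x) - (u2 x - v x) by ring.
    by rewrite e1 e2; ring.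
  have -> : (u1 x - u2 x) * (u1 x - u2 x) / h =
     (u1 x - u2 x) * (derive1 om1 x - derive1 om2 x).
    by rewrite [X in X * _ / _]ew; field; rewrite gt_eqF.
  lra.
move=> x0 x0in.
apply/eqP; rewrite -subr_eq0; apply/negPn/negP => wne.
move: x0in; rewrite in_itv /= => /andP[x00 x0T].
pose c := `|u1 x0 - u2 x0| / 2.
have c0 : 0 < c by rewrite divr_gt0 // normr_gt0.
have [d d0 Hd] := ac1 acW c0.
have nearw : forall y, 0 <= y -> y <= T -> `|y - x0| < d -> c * c <= (u1 y - u2 y) * (u1 y - u2 y).
  move=> y y0 yT yd.
  have : `|(u1 y - u2 y) - (u1 x0 - u2 x0)| < c.
    have [yx|xy] := leP y x0.
      rewrite distrC; apply: Hd => //; move: yd; rewrite distrC ger0_norm; lra.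
    apply: Hd => //; first exact: ltW.
    by move: yd; rewrite ger0_norm //; lra.
  move=> Hc.
  have : c <= `|u1 y - u2 y|.
    have := ler_normD (u1 x0 - u2 x0 - (u1 y - u2 y)) (u1 y - u2 y).
    rewrite subrK (distrC (u1 x0 - u2 x0)).
    have : `|u1 x0 - u2 x0| = 2 * c by rewrite /c; field.
    lra.
  move=> cw; have := ler_pM (ltW c0) (ltW c0) cw cw.
  by rewrite -!expr2 real_normK ?num_real.
pose p := Num.max 0 (x0 - d / 2).
pose q := Num.min T (x0 + d / 2).
have p0 : 0 <= p by rewrite le_max lexx.
have pT : p <= T by rewrite ge_max (ltW T0) /=; lra.
have q0 : 0 <= q by rewrite le_min (ltW T0) /=; lra.
have qT : q <= T by rewrite ge_min lexx.
have pq : p < q.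
  rewrite gt_max !lt_min T0 /=; apply/andP; split; first lra.
  apply/andP; split; lra.
have px : x0 - d / 2 <= p by rewrite le_max lexx orbT.
have qx : q <= x0 + d / 2 by rewrite ge_min lexx orbT.
pose k := c * c / h.
have k0 : 0 < k by rewrite divr_gt0 // mulr_gt0.
pose G := F - k \*: id.
have step1 : F 0 <= F p.
  apply: (ac_mono p0 (ac_restrict acF (lexx 0) pT)).
  apply: (ae_imp key) => x H; rewrite in_itv /= => /andP[h1 h2].
  have [dF HF] := H ltac:(rewrite in_itv /=; apply/andP; split; lra).
  split => //; apply: le_trans HF.
  by rewrite divr_ge0 ?(ltW h0) // -expr2 sqr_ge0.
have step3 : F q <= F T.
  apply: (ac_mono qT (ac_restrict acF q0 (lexx T))).
  apply: (ae_imp key) => x H; rewrite in_itv /= => /andP[h1 h2].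
  have [dF HF] := H ltac:(rewrite in_itv /=; apply/andP; split; lra).
  split => //; apply: le_trans HF.
  by rewrite divr_ge0 ?(ltW h0) // -expr2 sqr_ge0.
have GE : forall y, G y = F y - k * y by [].
have acG : abs_continuous p q G.
  have -> : G = (fun x => F x + - (k * x)) by apply/funext.
  apply: (ac_restrict _ p0 qT); apply: ac_add => //; apply: ac_opp; apply: ac_lin.
have step2 : G p <= G q.
  apply: (ac_mono (ltW pq) acG).
  apply: (ae_imp key) => x H; rewrite in_itv /= => /andP[h1 h2].
  have [dF HF] := H ltac:(rewrite in_itv /=; apply/andP; split; lra).
  have dk : derivable (k \*: (@id R)) x 1 by apply: derivableZ; apply: derivable_id.
  split; first by apply: derivableB.
  rewrite /G derive1_subf // derive1_lin subr_ge0; apply: le_trans HF.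
  rewrite ler_pM2r ?invr_gt0 //; apply: nearw; try lra.
  rewrite ltr_norml; apply/andP; split; lra.
rewrite !GE in step2.
have : 0 < k * (q - p) by rewrite mulr_gt0 // subr_gt0.
have -> : k * (q - p) = k * q - k * p by ring.
lra.
Qed.
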